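(* Let $N\ge 1$, let $a_1,\dots,a_N>0$, $T_1,\dots,T_N\ge 0$ and $P_{\mathrm{tot}}>0$. For $P_i\ge 0$ let $r_i(P_i)=\log_2(1+a_iP_i)$ and $J(\mathbf P)=\sum_{i=1}^N (r_i(P_i)-T_i)^2$ for $\mathbf P=(P_1,\dots,P_N)$. Consider the problem of minimizing $J(\mathbf P)$ subject to $\sum_{i=1}^N P_i\le P_{\mathrm{tot}}$ and $P_i\ge 0$ for all $i$. If $\mathbf P^*=(P_1^*,\dots,P_N^* )$ is an optimal solution of this problem, then $r_i(P_i^* )\le T_i$ for all $i=1,\dots,N$. *)

(* Defs.v *)
(* concrete reals. Indices i = 0..N-1 (paper's 1..N). *)
From Stdlib Require Import Reals.
Open Scope R_scope.

Definition log2 (x : R) : R := ln x / ln 2.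

Definition rate (a : nat -> R) (P : nat -> R) (i : nat) : R := log2 (1 + a i * P i).

Fixpoint sumN (N : nat) (f : nat -> R) : R :=
  match N with O => 0 | S n => sumN n f + f n end.

Definition J (N : nat) (a T P : nat -> R) : R :=
  sumN N (fun i => (rate a P i - T i) ^ 2).

Definition feasible (N : nat) (Ptot : R) (P : nat -> R) : Prop :=
  (forall i, (i < N)%nat -> 0 <= P i) /\ sumN N P <= Ptot.

Definition optimal (N : nat) (a T : nat -> R) (Ptot : R) (P : nat -> R) : Prop :=
  feasible N Ptot P /\ forall Q, feasible N Ptot Q -> J N a T P <= J N a T Q.

(* Main.v *)
Require Import Defs.
From Stdlib Require Import Reals.
From Stdlib Require Import Lra Lia.
Open Scope R_scope.

Lemma sumN_upd : forall N (f g : nat -> R) i, (forall j, j <> i -> g j = f j) ->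
  sumN N g = sumN N f + (if Nat.ltb i N then g i - f i else 0).
Proof.
  induction N as [|n IH]; intros f g i H; simpl.
  - destruct (Nat.ltb_spec i 0); [lia|lra].
  - rewrite (IH f g i H).
    destruct (Nat.eq_dec n i) as [->|Hn].
    + destruct (Nat.ltb_spec i i); [lia|]. destruct (Nat.ltb_spec i (S i)); [|lia]. lra.
    + rewrite (H n Hn).
      destruct (Nat.ltb_spec i n); destruct (Nat.ltb_spec i (S n)); try lia; lra.
Qed.

Theorem theorem1 (N : nat) (a T : nat -> R) (Ptot : R) (Pstar : nat -> R) :
  (1 <= N)%nat ->
  (forall i, (i < N)%nat -> 0 < a i) ->
  (forall i, (i < N)%nat -> 0 <= T i) ->
  0 < Ptot ->
  optimal N a T Ptot Pstar ->
  forall i, (i < N)%nat -> rate a Pstar i <= T i.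
Proof.
  intros _ Ha HT _ [[Hpos Hsum] Hopt] i Hi.
  destruct (Rle_or_lt (rate a Pstar i) (T i)) as [H|H]; [exact H|exfalso].
  pose proof (Ha i Hi) as Hai. pose proof (Hpos i Hi) as Hpi. pose proof (HT i Hi) as Hti.
  assert (Hl2 : 0 < ln 2) by (rewrite <- ln_1; apply ln_increasing; lra).
  set (q := (exp (T i * ln 2) - 1) / a i).
  assert (He1 : 1 <= exp (T i * ln 2)).
  { rewrite <- exp_0. destruct (Req_dec (T i * ln 2) 0) as [E|E]; [rewrite E; lra|].
    left. apply exp_increasing. nra. }
  assert (Hq0 : 0 <= q) by (unfold q; apply Rmult_le_pos; [lra| left; apply Rinv_0_lt_compat; lra]).
  assert (Hx : 0 < 1 + a i * Pstar i) by nra.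
  assert (Hlt : exp (T i * ln 2) < 1 + a i * Pstar i).
  { unfold rate, log2 in H. rewrite <- (exp_ln _ Hx). apply exp_increasing.
    apply (Rmult_lt_compat_r (ln 2)) in H; [|lra].
    unfold Rdiv in H. rewrite Rmult_assoc, Rinv_l in H; lra. }
  assert (Haq : a i * q = exp (T i * ln 2) - 1) by (unfold q; field; lra).
  assert (Hqlt : q < Pstar i) by nra.
  set (Q := fun j => if Nat.eq_dec j i then q else Pstar j).
  assert (HQ : forall j, j <> i -> Q j = Pstar j).
  { intros j Hj; unfold Q; destruct (Nat.eq_dec j i); [contradiction|reflexivity]. }
  assert (HQi : Q i = q) by (unfold Q; destruct (Nat.eq_dec i i); [reflexivity|contradiction]).
  assert (Hlti : Nat.ltb i N = true) by (apply Nat.ltb_lt; exact Hi).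
  assert (Hfeas : feasible N Ptot Q).
  { split.
    - intros j Hj. destruct (Nat.eq_dec j i) as [->|Hn]; [rewrite HQi; exact Hq0|rewrite HQ; auto].
    - rewrite (sumN_upd N Pstar Q i HQ), Hlti, HQi. lra. }
  specialize (Hopt Q Hfeas). unfold J in Hopt.
  rewrite (sumN_upd N (fun j => (rate a Pstar j - T j) ^ 2) (fun j => (rate a Q j - T j) ^ 2) i)
    in Hopt.
  2:{ intros j Hj. unfold rate. rewrite (HQ j Hj). reflexivity. }
  rewrite Hlti in Hopt.
  assert (HrQ : rate a Q i = T i).
  { unfold rate, log2. rewrite HQi, Haq.
    replace (1 + (exp (T i * ln 2) - 1)) with (exp (T i * ln 2)) by ring.
    rewrite ln_exp. field. lra. }
  rewrite HrQ in Hopt. 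
  assert (0 < (rate a Pstar i - T i) ^ 2) by (apply pow_lt; lra).
  replace ((T i - T i) ^ 2) with 0 in Hopt by ring. lra.
Qed.
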